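(* Let $L:\mathbb{R}^d\to\mathbb{R}^{\mathcal{Y}}_+$ be a polyhedral loss which indirectly elicits a finite property $\gamma:\Delta_{\mathcal{Y}}\rightrightarrows\mathcal{R}$. Then there exists $\epsilon_0>0$ such that for all $0<\epsilon\le\epsilon_0$, the general $\epsilon$-thickened link construction for $L,\gamma,\epsilon,\|\cdot\|_\infty$ produces a link that is separated (i.e., $\epsilon'$-separated for some $\epsilon'>0$) with respect to $\mathrm{prop}[L]$ and $\gamma$.
   Context: $\mathcal{Y}$ is a finite label set, $\Delta_{\mathcal{Y}}$ the simplex, $\mathbb{R}^{\mathcal{Y}}_+$ the nonnegative orthant. A property $\gamma:\Delta_{\mathcal{Y}}\rightrightarrows\mathcal{R}$ maps each $p$ to a nonempty subset of $\mathcal{R}$; finite if $\mathcal{R}$ finite; level sets $\gamma_r=\{p:r\in\gamma(p)\}$. $L:\mathbb{R}^d\to\mathbb{R}^{\mathcal{Y}}_+$ is polyhedral if each coordinate is a max of finitely many affine functions; it elicits $\Gamma=\mathrm{prop}[L]$, $\Gamma(p)=\arg\min_u\langle p,L(u)\rangle$. $L$ indirectly elicits $\gamma$ if for all $u$ there is $r$ with $\Gamma_u\subseteq\gamma_r$. General $\epsilon$-thickened link construction for $L,\gamma,\epsilon,\|\cdot\|$: let $\mathcal{U}=\{\Gamma(p):p\in\Delta_{\mathcal{Y}}\}$, $\Gamma_U=\{p:\Gamma(p)=U\}$, $R_U=\{r\in\mathcal{R}:\Gamma_U\subseteq\gamma_r\}$; initialize $\Psi(u)=\mathcal{R}$ for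 all $u$; for each $U\in\mathcal{U}$ and each $u$ with $\inf_{u^*\in U}\|u^*-u\|<\epsilon$ set $\Psi(u)\leftarrow\Psi(u)\cap R_U$; if $\Psi(u)\ne\emptyset$ for all $u$ the construction produces the links $\psi$ with $\psi(u)\in\Psi(u)$ for all $u$. A link $\psi:\mathbb{R}^d\to\mathcal{R}$ is $\epsilon'$-separated with respect to $\Gamma$ and $\gamma$ if $\psi(u)\notin\gamma(p)$ implies $\inf_{a\in\Gamma(p)}\|u-a\|_\infty\ge\epsilon'$. *)

(* Defs.v *)
From mathcomp Require Import all_boot all_order all_algebra.
From mathcomp Require Import reals.
Set Implicit Arguments. Unset Strict Implicit. Unset Printing Implicit Defensive.
Import Order.TTheory GRing.Theory Num.Theory.
Local Open Scope ring_scope.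

Section Defs.
Variables (R : realType) (d : nat) (Y Rr : finType).

Definition simplex (p : Y -> R) : Prop :=
  (forall y, 0 <= p y) /\ \sum_(y : Y) p y = 1.

Definition supnorm (v : 'rV[R]_d) : R := \big[Num.max/0]_(j < d) `|v 0 j|.

Definition affine (a : 'rV[R]_d) (b : R) (u : 'rV[R]_d) : R :=
  \sum_(j < d) a 0 j * u 0 j + b.

Definition polyhedral (L : 'rV[R]_d -> Y -> R) : Prop :=
  forall y, exists (n : nat) (a : 'I_n.+1 -> 'rV[R]_d) (b : 'I_n.+1 -> R),
    forall u, L u y = \big[Num.max/affine (a ord0) (b ord0) u]_(i < n.+1) affine (a i) (b i) u.

Definition nonneg_loss (L : 'rV[R]_d -> Y -> R) : Prop := forall u y, 0 <= L u y.

Definition exp_loss (L : 'rV[R]_d -> Y -> R) (p : Y -> R) (u : 'rV[R]_d) : R :=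
  \sum_(y : Y) p y * L u y.

(* u \in Gamma(p) = prop[L](p) = argmin_u <p, L(u)> *)
Definition propL (L : 'rV[R]_d -> Y -> R) (p : Y -> R) (u : 'rV[R]_d) : Prop :=
  forall u', exp_loss L p u <= exp_loss L p u'.

(* a property gamma : Delta_Y ⇉ Rr is given as a relation; "r \in gamma p" is gamma p r.
   It is a property: gamma(p) is nonempty for every p in the simplex. *)
Definition is_property (gamma : (Y -> R) -> Rr -> Prop) : Prop :=
  forall p, simplex p -> exists r, gamma p r.

Definition indirectly_elicits (L : 'rV[R]_d -> Y -> R) (gamma : (Y -> R) -> Rr -> Prop) : Prop :=
  forall u, exists r, forall p, simplex p -> propL L p u -> gamma p r.

(* R_U for U = Gamma(p0): r \in R_U iff Gamma_U ⊆ gamma_r, where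
   Gamma_U = {p \in simplex : Gamma(p) = U}. *)
Definition R_U (L : 'rV[R]_d -> Y -> R) (gamma : (Y -> R) -> Rr -> Prop) (p0 : Y -> R) (r : Rr) : Prop :=
  forall p, simplex p -> (forall v, propL L p v <-> propL L p0 v) -> gamma p r.

(* Psi(u) of the epsilon-thickened link construction (norm = sup norm):
   the intersection of R_U over all U \in {Gamma(p) : p \in simplex}
   with inf_{u* \in U} ||u* - u|| < eps (starting from all of Rr). *)
Definition Psi (L : 'rV[R]_d -> Y -> R) (gamma : (Y -> R) -> Rr -> Prop) (eps : R)
    (u : 'rV[R]_d) (r : Rr) : Prop :=
  forall p0, simplex p0 ->
    (exists ustar, propL L p0 ustar /\ supnorm (ustar - u) < eps) ->
    R_U L gamma p0 r.

Definition construction_produces (L : 'rV[R]_d -> Y -> R) (gamma : (Y -> R) -> Rr -> Prop) (eps : R) : Prop :=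
  forall u, exists r, Psi L gamma eps u r.

Definition produced_link (L : 'rV[R]_d -> Y -> R) (gamma : (Y -> R) -> Rr -> Prop) (eps : R)
    (psi : 'rV[R]_d -> Rr) : Prop :=
  forall u, Psi L gamma eps u (psi u).

Definition separated_link (L : 'rV[R]_d -> Y -> R) (gamma : (Y -> R) -> Rr -> Prop) (eps' : R)
    (psi : 'rV[R]_d -> Rr) : Prop :=
  forall u p, simplex p -> ~ gamma p (psi u) ->
    forall a, propL L p a -> eps' <= supnorm (u - a).

End Defs.

(* Main.v *)
Require Import Defs.
From mathcomp Require Import all_boot all_order all_algebra.
From mathcomp Require Import reals boolp.
From Stdlib Require List Classical.
From mathcomp Require Import ring lra.
Set Implicit Arguments. Unset Strict Implicit. Unset Printing Implicit Defensive.
Import Order.TTheory GRing.Theory Num.Theory.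
Local Open Scope ring_scope.

Section FM.
Variable R : realType.
Notation cstr := ((nat -> R) * R)%type.

Definition ev (n : nat) (g : cstr) (v : nat -> R) : R :=
  \sum_(i < n) g.1 i * v i + g.2.

Definition comb (n : nat) (g k : cstr) : cstr :=
  ((fun i => (g.1 n * k.1 i - k.1 n * g.1 i) / (g.1 n - k.1 n)),
   (g.1 n * k.2 - k.1 n * g.2) / (g.1 n - k.1 n)).

Definition upd (v : nat -> R) (n : nat) (x : R) : nat -> R :=
  fun i => if i == n then x else v i.

Lemma ev_last n g v : ev n.+1 g v = ev n g v + g.1 n * v n.
Proof. by rewrite /ev big_ord_recr /= addrAC. Qed.

Lemma ev_upd n g v x : ev n g (upd v n x) = ev n g v.
Proof.
rewrite /ev; congr (_ + _); apply: eq_bigr => i _.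
by rewrite /upd (ltn_eqF (ltn_ord i)).
Qed.

Lemma ev_comb m n g k v : ev m (comb n g k) v =
  (g.1 n * ev m k v - k.1 n * ev m g v) / (g.1 n - k.1 n).
Proof.
rewrite /ev /= mulrBl !mulrDr mulrBl.
have -> : \sum_(i < m) (g.1 n * k.1 i - k.1 n * g.1 i) / (g.1 n - k.1 n) * v i
  = g.1 n * (\sum_(i < m) k.1 i * v i) / (g.1 n - k.1 n)
    - k.1 n * (\sum_(i < m) g.1 i * v i) / (g.1 n - k.1 n).
  rewrite !mulr_sumr !mulr_suml -sumrB; apply: eq_bigr => i _; ring.
ring.
Qed.

Definition news (n : nat) (s : seq cstr) : seq cstr :=
  List.app (List.filter (fun g : cstr => g.1 n == 0) s)
   (List.flat_map (fun g => List.flat_map (fun k =>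
      if (0 < g.1 n) && (k.1 n < 0) then [:: comb n g k] else [::]) s) s).

Lemma news_inv n s G : List.In G (news n s) ->
  (List.In G s /\ G.1 n = 0) \/
  exists g k, [/\ List.In g s, List.In k s, 0 < g.1 n, k.1 n < 0 & G = comb n g k].
Proof.
rewrite /news List.in_app_iff List.filter_In => -[[H /eqP H']|]; first by left.
move/List.in_flat_map=> [g [Hg /List.in_flat_map [k [Hk]]]].
case: ifP => //= /andP[a b] [] // <-; right; by exists g, k.
Qed.

Lemma news_filt n s g : List.In g s -> g.1 n = 0 -> List.In g (news n s).
Proof.
move=> Hg H; rewrite /news List.in_app_iff List.filter_In; left; split=> //.
by apply/eqP.
Qed.

Lemma news_comb n s g k : List.In g s -> List.In k s -> 0 < g.1 n -> k.1 n < 0 ->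
  List.In (comb n g k) (news n s).
Proof.
move=> Hg Hk a b; rewrite /news List.in_app_iff; right.
apply/List.in_flat_map; exists g; split=> //.
apply/List.in_flat_map; exists k; split=> //.
by rewrite a b /=; left.
Qed.

Lemma comb_last n g k : 0 < g.1 n -> k.1 n < 0 -> (comb n g k).1 n = 0.
Proof. by move=> a b; rewrite /= [k.1 n * _]mulrC subrr mul0r. Qed.

Lemma news_last n s G : List.In G (news n s) -> G.1 n = 0.
Proof.
case/news_inv=> [[] //|[g [k [_ _ a b ->]]]]; exact: comb_last.
Qed.

Lemma ev_zero_last n g v : g.1 n = 0 -> ev n.+1 g v = ev n g v.
Proof. by move=> H; rewrite ev_last H mul0r addr0. Qed.

Lemma E1 n s G v : List.In G (news n s) ->
  exists g, List.In g s /\ ev n.+1 G v <= ev n.+1 g v.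
Proof.
case/news_inv=> [[H _]|[g [k [Hg Hk a b ->]]]]; first by exists G.
have D : 0 < g.1 n - k.1 n by lra.
rewrite ev_comb.
set eg := ev n.+1 g v; set ek := ev n.+1 k v.
have [le|lt] := lerP ek eg.
  exists g; split=> //; rewrite ler_pdivrMr //.
  have h : 0 <= g.1 n * (eg - ek) by apply: mulr_ge0; lra.
  rewrite -/eg; lra.
exists k; split=> //; rewrite ler_pdivrMr // -/ek.
have h : 0 <= - k.1 n * (ek - eg) by apply: mulr_ge0; lra.
lra.
Qed.

Lemma sep_low (T : Type) (sU : seq T) (Q : T -> Prop) (hi : T -> R) :
  exists x, forall b, List.In b sU -> Q b -> x <= hi b.
Proof.
elim: sU => [|b s [x Hx]]; first by exists 0.
exists (Num.min (hi b) x) => c /= [<-|Hc] Qc; first by rewrite ge_min lexx.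
by rewrite ge_min (Hx c Hc Qc) orbT.
Qed.

Lemma sep (T : Type) (sL sU : seq T) (P Q : T -> Prop) (lo hi : T -> R) :
  (forall a b, List.In a sL -> P a -> List.In b sU -> Q b -> lo a <= hi b) ->
  exists x, (forall a, List.In a sL -> P a -> lo a <= x) /\
            (forall b, List.In b sU -> Q b -> x <= hi b).
Proof.
elim: sL => [|a s IH] H.
  have [x Hx] := sep_low sU Q hi; by exists x.
have [|x [H1 H2]] := IH; first by move=> a' b Ha; apply: H; right.
case: (Classical_Prop.classic (P a)) => Pa.
  exists (Num.max (lo a) x); split.
    move=> c /= [<-|Hc] Pc; first by rewrite le_max lexx.
    by rewrite le_max (H1 c Hc Pc) orbT.
  move=> b Hb Qb; rewrite ge_max H2 // andbT; apply: H => //; by left.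
exists x; split=> //.
move=> c /= [<-|Hc] Pc; [by [] | exact: H1].
Qed.

Lemma E2 n s v : (forall G, List.In G (news n s) -> ev n G v <= 0) ->
  exists x, forall g, List.In g s -> ev n.+1 g (upd v n x) <= 0.
Proof.
move=> H.
have [|x [H1 H2]] := @sep _ s s (fun k : cstr => k.1 n < 0) (fun g : cstr => 0 < g.1 n)
   (fun k => ev n k v / (- k.1 n)) (fun g => - ev n g v / g.1 n).
  move=> k g Hk b Hg a.
  have := H _ (news_comb Hg Hk a b); rewrite ev_comb.
  have D : 0 < g.1 n - k.1 n by lra.
  have b' : 0 < - k.1 n by lra.
  rewrite ler_pdivrMr // mul0r ler_pdivlMr // mulrAC ler_pdivrMr //.
  nra.
exists x => g Hg; rewrite ev_last ev_upd /upd eqxx.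
case: (ltrgtP (g.1 n) 0) => [b|a|e].
- have := H1 _ Hg b; have b' : 0 < - g.1 n by lra.
  rewrite ler_pdivrMr //; nra.
- have := H2 _ Hg a; rewrite ler_pdivlMr //; nra.
- by rewrite e mul0r addr0; apply: H; apply: news_filt.
Qed.

Lemma Qlemma n (s : seq cstr) :
  (forall v, exists g, List.In g s /\ 0 < ev n g v) ->
  exists delta, 0 < delta /\ forall v, exists g, List.In g s /\ delta <= ev n g v.
Proof.
elim: n s => [|n IH] s H.
  have [g [Hg Hpos]] := H (fun _ => 0).
  exists (ev 0 g (fun _ => 0)); split=> // v; exists g; split=> //.
  by rewrite /ev !big_ord0.
have [|delta [dpos Hd]] := IH (news n s).
  move=> v; apply: Classical_Prop.NNPP => Hn.
  have [|x Hx] := @E2 n s v.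
    move=> G HG; rewrite leNgt; apply/negP => Hlt; apply: Hn; by exists G.
  have [g [Hg Hp]] := H (upd v n x).
  by have := Hx g Hg; rewrite leNgt Hp.
exists delta; split=> // v.
have [G [HG HGd]] := Hd v.
have [g [Hg Hle]] := E1 v HG.
exists g; split=> //; apply: le_trans Hle.
by rewrite ev_zero_last // (news_last HG).
Qed.

End FM.

Set Implicit Arguments. Unset Strict Implicit. Unset Printing Implicit Defensive.
Import Order.TTheory GRing.Theory Num.Theory.
Local Open Scope ring_scope.

Section Gen.
Variable R : realType.

Lemma fin_min (T : finType) (P : T -> R -> Prop) :
  (forall t e e', P t e -> 0 < e' -> e' <= e -> P t e') ->
  (forall t, exists e, 0 < e /\ P t e) -> exists e, 0 < e /\ forall t, P t e.
Proof.
move=> Hd He.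
suff [e [ep H]] : exists e, 0 < e /\ forall t, t \in enum T -> P t e.
  by exists e; split=> // t; apply: H; rewrite mem_enum.
elim: (enum T) => [|a l [e [ep H]]]; first by exists 1; split.
have [ea [eap Ha]] := He a.
exists (Num.min ea e); split; first by rewrite lt_min ep eap.
move=> t; rewrite in_cons => /orP[/eqP->|Ht].
  by apply: (Hd _ ea) => //; [rewrite lt_min ep eap| rewrite ge_min lexx].
by apply: (Hd _ e) => //; [exact: H | rewrite lt_min ep eap| rewrite ge_min lexx orbT].
Qed.

Lemma in_In (T : eqType) (x : T) (s : seq T) : x \in s -> List.In x s.
Proof.
elim: s => [|a s IH] //=; rewrite in_cons => /orP[/eqP->|H]; [by left|right; exact: IH].
Qed.

Variable d : nat.

Definition lin (a h : 'rV[R]_d) : R := \sum_(j < d) a 0 j * h 0 j.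

Lemma affine_shift a b w t h :
  affine a b (w + t *: h) = affine a b w + t * lin a h.
Proof.
rewrite /affine /lin mulr_sumr addrAC -big_split /=; congr (_ + _).
by apply: eq_bigr => j _; rewrite !mxE; ring.
Qed.

Lemma affine_diff a b v v' : affine a b v' = affine a b v + lin a (v' - v).
Proof. by rewrite -[lin a _]mul1r -affine_shift scale1r addrC subrK. Qed.

Lemma supnorm_ge (v : 'rV[R]_d) j : `|v 0 j| <= supnorm v.
Proof. by rewrite /supnorm (bigD1 j) //= le_max lexx. Qed.

Lemma supnorm_ge0 (v : 'rV[R]_d) : 0 <= supnorm v.
Proof. rewrite /supnorm; apply: (big_ind (fun x : R => 0 <= x)) => //; by move=> x y hx _; rewrite le_max hx. Qed.

Lemma supnorm_opp (v : 'rV[R]_d) : supnorm (- v) = supnorm v.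
Proof. rewrite /supnorm; apply: eq_bigr => j _; by rewrite mxE normrN. Qed.

Lemma supnorm_sym (u w : 'rV[R]_d) : supnorm (u - w) = supnorm (w - u).
Proof. by rewrite -opprB supnorm_opp. Qed.

Lemma lin_bound a h : `|lin a h| <= (\sum_(j < d) `|a 0 j|) * supnorm h.
Proof.
rewrite mulr_suml; apply: le_trans (ler_norm_sum _ _ _) _; apply: ler_sum => j _.
by rewrite normrM ler_wpM2l // supnorm_ge.
Qed.

Lemma bigmax_ge m (F : 'I_m.+1 -> R) i : F i <= \big[Num.max/F ord0]_(j < m.+1) F j.
Proof. by rewrite (bigD1 i) //= le_max lexx. Qed.

Lemma bigmax_att m (F : 'I_m.+1 -> R) : exists i, \big[Num.max/F ord0]_(j < m.+1) F j = F i.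
Proof.
apply: (big_ind (fun x => exists i, x = F i)); first by exists ord0.
  move=> x y [i ->] [j ->]; rewrite maxEle; case: ifP => _; [by exists j|by exists i].
by move=> i _; exists i.
Qed.

End Gen.

Section Main.
Variables (R : realType) (d : nat) (Y Rr : finType) (L : 'rV[R]_d -> Y -> R).
Variables (K : finType) (tg : K -> Y) (A : K -> 'rV[R]_d) (B : K -> R).
Hypothesis F1 : forall k u, affine (A k) (B k) u <= L u (tg k).
Hypothesis F2 : forall y u, exists k, tg k = y /\ affine (A k) (B k) u = L u y.

Local Notation ell k u := (affine (A k) (B k) u).
Definition active k u : bool := ell k u == L u (tg k).

Lemma opt_transfer p w v : simplex p -> propL L p w ->
  (forall k, active k w -> active k v) -> propL L p v.
Proof.
move=> [p0 _] Hw Hwv v'.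
pose P := (fun (jk : (K * K)%type) t => active jk.2 w -> tg jk.2 = tg jk.1 ->
   ~~ active jk.1 w -> ell jk.1 (w + t *: (v' - v)) < ell jk.2 (w + t *: (v' - v))).
have H0 : forall jk e e', P jk e -> 0 < e' -> e' <= e -> P jk e'.
  move=> [j k0] e e' H e'p e'e; rewrite /P /= => Ak0 Htg Nj.
  have := H Ak0 Htg Nj; rewrite !affine_shift => He.
  have gj : ell j w < ell k0 w.
    move/eqP: Ak0 => ->; rewrite Htg lt_neqAle F1 andbT; exact: Nj.
  case: (lerP 0 (lin (A k0) (v' - v) - lin (A j) (v' - v))) => HD.
    have : 0 <= e' * (lin (A k0) (v' - v) - lin (A j) (v' - v)) by apply: mulr_ge0 => //; exact: ltW.
    lra.
  have : 0 <= (e - e') * (lin (A j) (v' - v) - lin (A k0) (v' - v)) by apply: mulr_ge0; lra.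
  lra.
have H1 : forall jk, exists e, 0 < e /\ P jk e.
  move=> [j k0]; rewrite /P /=.
  case Ak0: (active k0 w); last by exists 1; split.
  case Aj: (active j w); first by exists 1; split.
  case: (eqVneq (tg k0) (tg j)) => Htg; last by exists 1; split=> // _ E; rewrite E eqxx in Htg.
  have gj : ell j w < ell k0 w.
    move/eqP: Ak0 => ->; by rewrite Htg lt_neqAle F1 andbT -/(active j w) Aj.
  pose D := `|lin (A k0) (v' - v) - lin (A j) (v' - v)| + 1.
  have Dp : 0 < D by rewrite /D; have := normr_ge0 (lin (A k0) (v' - v) - lin (A j) (v' - v)); lra.
  exists ((ell k0 w - ell j w) / D); split; first by apply: divr_gt0 => //; lra.
  move=> _ _ _; rewrite !affine_shift.
  have eD : (ell k0 w - ell j w) / D * D = ell k0 w - ell j w by rewrite divfK // gt_eqF.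
  have ep : 0 < (ell k0 w - ell j w) / D by apply: divr_gt0 => //; lra.
  have := ler_norm (- (lin (A k0) (v' - v) - lin (A j) (v' - v))); rewrite normrN => Hn.
  have : 0 <= (ell k0 w - ell j w) / D * (`|lin (A k0) (v' - v) - lin (A j) (v' - v)| + (lin (A k0) (v' - v) - lin (A j) (v' - v))).
    apply: mulr_ge0; lra.
  move: eD; rewrite /D; lra.
have [t [tp Ht]] := fin_min H0 H1.
have Hy : forall y, L (w + t *: (v' - v)) y - L w y <= t * (L v' y - L v y).
  move=> y; have [k [tk Ek]] := F2 y (w + t *: (v' - v)).
  have Ak : active k w.
    apply/negPn/negP => Nk; have [k0 [tk0 Ek0]] := F2 y w.
    have Ak0 : active k0 w by rewrite /active Ek0 tk0.
    have Htg : tg k0 = tg k by rewrite tk0 tk.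
    have := Ht (k, k0) Ak0 Htg Nk; rewrite /=.
    have := F1 k0 (w + t *: (v' - v)); rewrite tk0 -Ek; lra.
  have Av := Hwv k Ak; move/eqP: Ak => Ak; move/eqP: Av => Av.
  rewrite -Ek affine_shift -tk -Ak -Av.
  have := F1 k v'; rewrite (affine_diff _ _ v) => H.
  have : t * lin (A k) (v' - v) <= t * (L v' (tg k) - ell k v) by apply: ler_wpM2l; [exact: ltW | lra].
  lra.
have Hsum : exp_loss L p (w + t *: (v' - v)) - exp_loss L p w <= t * (exp_loss L p v' - exp_loss L p v).
  rewrite /exp_loss -!sumrB mulr_sumr; apply: ler_sum => y _.
  have -> : t * (p y * L v' y - p y * L v y) = p y * (t * (L v' y - L v y)) by ring.
  by rewrite -mulrBr; apply: ler_wpM2l.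
have := Hw (w + t *: (v' - v)).
have : 0 <= t * (exp_loss L p v' - exp_loss L p v) -> 0 <= exp_loss L p v' - exp_loss L p v.
  by rewrite pmulr_rge0.
lra.
Qed.


Definition toF (c : 'rV[R]_d) : nat -> R := fun i => oapp (fun o : 'I_d => c 0 o) 0 (insub i).

Lemma toFE c (o : 'I_d) : toF c o = c 0 o.
Proof. by rewrite /toF valK. Qed.

Definition cf (S : {set K}) (kj : (K * K)%type) : (nat -> R) * R :=
  if (kj.1 \in S) && (tg kj.2 == tg kj.1) then (toF (A kj.2 - A kj.1), B kj.2 - B kj.1)
  else ((fun _ => 0), -1).

Lemma ev_cf (S : {set K}) (kj : (K * K)%type) (w : nat -> R) (v : 'rV[R]_d) : (kj.1 \in S) && (tg kj.2 == tg kj.1) ->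
  (forall i : 'I_d, w i = v 0 i) -> ev d (cf S kj) w = ell kj.2 v - ell kj.1 v.
Proof.
move=> C Hw; rewrite /cf C /ev /affine /=.
have -> : \sum_(i < d) toF (A kj.2 - A kj.1) i * w i =
   \sum_(i < d) A kj.2 0 i * v 0 i - \sum_(i < d) A kj.1 0 i * v 0 i.
  by rewrite -sumrB; apply: eq_bigr => i _; rewrite toFE Hw !mxE; ring.
ring.
Qed.

Lemma ev_cf0 (S : {set K}) (kj : (K * K)%type) (w : nat -> R) : ~~ ((kj.1 \in S) && (tg kj.2 == tg kj.1)) -> ev d (cf S kj) w = -1.
Proof.
move=> C; rewrite /cf (negbTE C) /ev /= big1 ?add0r // => i _; exact: mul0r.
Qed.

Lemma delta_exists : exists e, 0 < e /\ forall S : {set K},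
  (forall v, exists k j, [/\ k \in S, tg j = tg k & ell k v < ell j v]) ->
  forall v, exists k j, [/\ k \in S, tg j = tg k & e <= ell j v - ell k v].
Proof.
apply: fin_min.
  move=> S e e' H _ le Hy v; have [k [j [a b c]]] := H Hy v.
  by exists k, j; split=> //; exact: le_trans le c.
move=> S.
case: (Classical_Prop.classic (forall v, exists k j, [/\ k \in S, tg j = tg k & ell k v < ell j v])) => Hyp;
  last by exists 1; split=> // /Hyp.
pose l := List.map (cf S) (enum {: K * K}).
have Hin : forall kj, List.In (cf S kj) l.
  by move=> kj; apply: List.in_map; apply: in_In; rewrite mem_enum.
have [|e [ep He]] := @Qlemma R d l.
  move=> w; have [k [j [kS tj lt]]] := Hyp (\row_(i < d) w i).
  have C : ((k, j).1 \in S) && (tg (k, j).2 == tg (k, j).1) by rewrite /= kS tj eqxx.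
  exists (cf S (k, j)); split=> //.
  by rewrite (ev_cf C (v := \row_(i < d) w i)) ?subr_gt0 // => i; rewrite mxE.
exists e; split=> // _ v.
have [g [Hg Hle]] := He (toF v).
move/List.in_map_iff: Hg => [[k j] [Hg _]]; subst g.
case C : (((k, j).1 \in S) && (tg (k, j).2 == tg (k, j).1)).
  move: (C) => /= /andP[kS /eqP tj]; exists k, j; split=> //.
  by rewrite -(ev_cf C (w := toF v)) // => i; rewrite toFE.
by move: Hle; rewrite ev_cf0 ?C //; lra.
Qed.

Theorem main_abs (gamma : (Y -> R) -> Rr -> Prop) : indirectly_elicits L gamma ->
  exists eps0 : R, 0 < eps0 /\
    forall eps : R, 0 < eps -> eps <= eps0 ->
      construction_produces L gamma eps /\
      forall psi : 'rV[R]_d -> Rr, produced_link L gamma eps psi ->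
        exists eps' : R, 0 < eps' /\ separated_link L gamma eps' psi.
Proof.
move=> Hind.
pose M := \sum_(k : K) \sum_(j < d) `|A k 0 j|.
have HM0 : forall k, 0 <= \sum_(j < d) `|A k 0 j| by move=> k; apply: sumr_ge0.
have HM : forall k, \sum_(j < d) `|A k 0 j| <= M.
  move=> k; rewrite /M (bigD1 k) //= lerDl; apply: sumr_ge0 => k' _; exact: HM0.
have M0 : 0 <= M by apply: sumr_ge0.
have [d0 [d0p Hd0]] := delta_exists.
have Dp : 0 < 2 * M + 1 by lra.
exists (d0 / (2 * M + 1)); split; first by apply: divr_gt0.
move=> eps ep le.
have eD : d0 / (2 * M + 1) * (2 * M + 1) = d0 by rewrite divfK // gt_eqF.
have Hcp : construction_produces L gamma eps.
  move=> u.
  pose S := [set k | `[< exists w, supnorm (w - u) < eps /\ active k w >]].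
  have [vs Hvs] : exists vs, forall k j, k \in S -> tg j = tg k -> ell j vs <= ell k vs.
    apply: Classical_Prop.NNPP => Hno.
    have Hyp : forall v, exists k j, [/\ k \in S, tg j = tg k & ell k v < ell j v].
      move=> v; apply: Classical_Prop.NNPP => Hn; apply: Hno; exists v => k j kS tj.
      rewrite leNgt; apply/negP => lt; apply: Hn; by exists k, j.
    have [k [j [kS tj Hd]]] := Hd0 S Hyp u.
    move: kS; rewrite inE => /asboolP [w [Hwu Aw]].
    have Ej := affine_diff (A j) (B j) w u.
    have Ek := affine_diff (A k) (B k) w u.
    have Lj := lin_bound (A j) (u - w).
    have Lk := lin_bound (A k) (u - w).
    rewrite supnorm_sym in Lj Lk.
    have s0 := supnorm_ge0 (w - u).
    have Bj : (\sum_(i < d) `|A j 0 i|) * supnorm (w - u) <= M * eps.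
      by apply: ler_pM; [exact: HM0 | exact: s0 | exact: HM | exact: ltW].
    have Bk : (\sum_(i < d) `|A k 0 i|) * supnorm (w - u) <= M * eps.
      by apply: ler_pM; [exact: HM0 | exact: s0 | exact: HM | exact: ltW].
    have Me : M * eps <= M * (d0 / (2 * M + 1)) by apply: ler_wpM2l.
    have Fj := F1 j w; rewrite tj -(eqP Aw) in Fj.
    have Nj := ler_norm (lin (A j) (u - w)).
    have Nk := ler_norm (- lin (A k) (u - w)); rewrite normrN in Nk.
    lra.
  have Avs : forall k, k \in S -> active k vs.
    move=> k kS; rewrite /active eq_le F1 /=.
    have [j [tj Ej]] := F2 (tg k) vs; rewrite -Ej; exact: Hvs.
  have [r Hr] := Hind vs.
  exists r => p0 sp0 [us [Hus Hdist]] p sp Hiff.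
  suff Hp : propL L p vs by exact: (Hr p sp Hp).
  apply: (opt_transfer sp (w := us)); first by apply/Hiff.
  move=> k Ak; apply: Avs; rewrite inE; apply/asboolP; by exists us.
split=> // psi Hpsi; exists eps; split=> // u p sp Hng a Ha.
rewrite leNgt; apply/negP => Hlt; apply: Hng.
apply: (Hpsi u p sp _ p sp); last by [].
by exists a; split=> //; rewrite supnorm_sym.
Qed.

End Main.

Theorem proposition7 (R : realType) (d : nat) (Y Rr : finType)
    (L : 'rV[R]_d -> Y -> R) (gamma : (Y -> R) -> Rr -> Prop) :
  polyhedral L -> nonneg_loss L -> is_property gamma -> indirectly_elicits L gamma ->
  exists eps0 : R, 0 < eps0 /\
    forall eps : R, 0 < eps -> eps <= eps0 ->
      construction_produces L gamma eps /\
      forall psi : 'rV[R]_d -> Rr, produced_link L gamma eps psi ->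
        exists eps' : R, 0 < eps' /\ separated_link L gamma eps' psi.
Proof.
move=> Hpoly _ _ Hind.
have H' : forall y, exists t : {n : nat & (('I_n.+1 -> 'rV[R]_d) * ('I_n.+1 -> R))%type},
  forall u, L u y = \big[Num.max/affine ((projT2 t).1 ord0) ((projT2 t).2 ord0) u]_(i < (projT1 t).+1)
                     affine ((projT2 t).1 i) ((projT2 t).2 i) u.
  by move=> y; have [n [a [b H]]] := Hpoly y; exists (existT _ n (a, b)).
pose T y := proj1_sig (cid (H' y)).
have HT : forall y u, L u y = \big[Num.max/affine ((projT2 (T y)).1 ord0) ((projT2 (T y)).2 ord0) u]_(i < (projT1 (T y)).+1)
                     affine ((projT2 (T y)).1 i) ((projT2 (T y)).2 i) u.
  move=> y; exact: (proj2_sig (cid (H' y))).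
pose K := {y : Y & 'I_(projT1 (T y)).+1}.
apply: (@main_abs R d Y Rr L K (fun k : K => tag k)
   (fun k : K => (projT2 (T (tag k))).1 (tagged k))
   (fun k : K => (projT2 (T (tag k))).2 (tagged k))) => //.
- move=> k u; rewrite (HT (tag k) u); exact: bigmax_ge.
- move=> y u; have [i Hi] := bigmax_att (fun i => affine ((projT2 (T y)).1 i) ((projT2 (T y)).2 i) u).
  by exists (Tagged (fun y => 'I_(projT1 (T y)).+1) i); split=> //; rewrite (HT y u) Hi.
Qed.
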